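(* Let $(X,d)$ be a metric space and let $u,u_1,u_2,\ldots\in F_{USC}(X)$. If $H_{\rm end}(u_n,u)\to0$, then $H([u_n]_\alpha,[u]_\alpha)\to0$ for each $\alpha\in(0,1)\setminus P_0(u)$.
   Context: A fuzzy set on $X$ is a function $u:X\to[0,1]$, with $\alpha$-cuts $[u]_\alpha=\{x: u(x)\ge\alpha\}$ for $\alpha\in(0,1]$ and $[u]_0=\overline{\{u>0\}}$. $F_{USC}(X)$ is the set of fuzzy sets with all $\alpha$-cuts ($\alpha\in[0,1]$) non-empty and closed. For non-empty closed sets $U,V$ in a metric space $(Y,\rho)$, $H(U,V)=\max\{\sup_{a\in U}\inf_{b\in V}\rho(a,b),\sup_{b\in V}\inf_{a\in U}\rho(a,b)\}$. $X\times[0,1]$ is metrized by $\overline{d}((x,\alpha),(y,\beta))=d(x,y)+|\alpha-\beta|$, ${\rm end}\,u=\{(x,t)\in X\times[0,1]: u(x)\ge t\}$, $H_{\rm end}(u,v)=H({\rm end}\,u,{\rm end}\,v)$. $P_0(u)=\{\alpha\in(0,1): \lim_{\beta\to\alpha}H([u]_\beta,[u]_\alpha)\neq0\}$, i.e. the set of $\alpha\in(0,1)$ at which it is not the case that $H([u]_\beta,[u]_\alpha)\to0$ as $\beta\to\alpha$. *)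

(* Defs.v *)
From mathcomp Require Import all_boot all_order all_algebra.
From mathcomp Require Import all_classical all_reals all_analysis.
Set Implicit Arguments. Unset Strict Implicit. Unset Printing Implicit Defensive.
Import Order.TTheory GRing.Theory Num.Theory.
Local Open Scope classical_set_scope.
Local Open Scope ring_scope.

Section Fuzzy.
Variable R : realType.

Definition is_metric (Y : Type) (rho : Y -> Y -> R) : Prop :=
  (forall x y, 0 <= rho x y) /\
  (forall x y, rho x y = 0 <-> x = y) /\
  (forall x y, rho x y = rho y x) /\
  (forall x y z, rho x z <= rho x y + rho y z).

Definition mclosure (Y : Type) (rho : Y -> Y -> R) (A : set Y) : set Y :=
  [set x | forall e : R, 0 < e -> exists2 y, A y & rho x y < e].

Definition mclosed (Y : Type) (rho : Y -> Y -> R) (A : set Y) : Prop :=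
  mclosure rho A `<=` A.

Definition hausdorff (Y : Type) (rho : Y -> Y -> R) (U V : set Y) : \bar R :=
  Order.max
    (ereal_sup [set ereal_inf [set (rho a b)%:E | b in V] | a in U])
    (ereal_sup [set ereal_inf [set (rho a b)%:E | a in U] | b in V]).

Variable X : Type.
Variable d : X -> X -> R.

Definition acut (u : X -> R) (a : R) : set X :=
  if 0 < a then [set x | a <= u x] else mclosure d [set x | 0 < u x].

Definition F_USC (u : X -> R) : Prop :=
  (forall x, 0 <= u x <= 1) /\
  (forall a : R, 0 <= a <= 1 -> acut u a !=set0 /\ mclosed d (acut u a)).

Definition dbar (p q : X * R) : R := d p.1 q.1 + `|p.2 - q.2|.

Definition endo (u : X -> R) : set (X * R) :=
  [set p | 0 <= p.2 <= 1 /\ p.2 <= u p.1].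

Definition H_end (u v : X -> R) : \bar R := hausdorff dbar (endo u) (endo v).

Definition P0 (u : X -> R) : set R :=
  [set a | 0 < a < 1 /\
     ~ ((fun b : R => hausdorff d (acut u b) (acut u a)) @ a^' --> 0%E)].

End Fuzzy.

(* Main.v *)
Require Import Defs.
From mathcomp Require Import all_boot all_order all_algebra.
From mathcomp Require Import all_classical all_reals all_analysis.
From mathcomp Require Import lra.
Import Order.TTheory GRing.Theory Num.Theory.
Set Implicit Arguments. Unset Strict Implicit. Unset Printing Implicit Defensive.
Local Open Scope classical_set_scope.
Local Open Scope ring_scope.

Lemma haus_lt (R : realType) (Y : Type) (rho : Y -> Y -> R) U V (e : R) :
  (hausdorff rho U V < e%:E)%E ->
  (forall a, U a -> exists2 b, V b & rho a b < e) /\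
  (forall b, V b -> exists2 a, U a & rho a b < e).
Proof.
rewrite /hausdorff gt_max => /andP[h1 h2]; split.
- move=> a Ua.
  have : (ereal_inf [set (rho a b)%:E | b in V] < e%:E)%E.
    apply: le_lt_trans h1; apply: ereal_sup_ubound; by exists a.
  move/ereal_inf_lt => [_ [b Vb <-]]; rewrite lte_fin => h; by exists b.
- move=> b Vb.
  have : (ereal_inf [set (rho a b)%:E | a in U] < e%:E)%E.
    apply: le_lt_trans h2; apply: ereal_sup_ubound; by exists b.
  move/ereal_inf_lt => [_ [a Ua <-]]; rewrite lte_fin => h; by exists a.
Qed.

Lemma haus_le (R : realType) (Y : Type) (rho : Y -> Y -> R) U V (e : R) :
  (forall x y, 0 <= rho x y) -> V !=set0 ->
  (forall a, U a -> exists2 b, V b & rho a b < e) ->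
  (forall b, V b -> exists2 a, U a & rho a b < e) ->
  (0 <= hausdorff rho U V <= e%:E)%E.
Proof.
move=> r0 [v Vv] h1 h2; apply/andP; split.
- rewrite /hausdorff le_max; apply/orP; right.
  apply: (@le_trans _ _ (ereal_inf [set (rho a v)%:E | a in U])).
    apply: le_ereal_inf_tmp => _ [a Ua <-]; by rewrite lee_fin.
  apply: ereal_sup_ubound; by exists v.
- rewrite /hausdorff ge_max; apply/andP; split.
  + apply: ge_ereal_sup => _ [a Ua <-].
    have [b Vb hb] := h1 a Ua.
    apply: ge_ereal_inf; exists (rho a b)%:E; first by exists b.
    by rewrite lee_fin ltW.
  + apply: ge_ereal_sup => _ [b Vb <-].
    have [a Ua ha] := h2 b Vb.
    apply: ge_ereal_inf; exists (rho a b)%:E; first by exists a.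
    by rewrite lee_fin ltW.
Qed.

Lemma cvg_to0 (R : realType) (T : Type) (F : set_system T) {FF : Filter F}
  (f : T -> \bar R) :
  f @ F --> 0%E -> forall e : R, 0 < e -> \forall t \near F, (f t < e%:E)%E.
Proof.
move=> /fine_cvgP [hfin hc] e he.
move/cvgrPdist_lt: hc => /(_ e he) h; apply: filterS2 hfin h => t ft.
rewrite sub0r normrN /= => h.
rewrite -(fineK ft) lte_fin; exact: le_lt_trans (ler_norm _) h.
Qed.

Lemma cvg_from0 (R : realType) (T : Type) (F : set_system T) {FF : Filter F}
  (f : T -> \bar R) :
  (forall e : R, 0 < e -> \forall t \near F, (0 <= f t <= e%:E)%E) ->
  f @ F --> 0%E.
Proof.
move=> h; apply/fine_cvgP; split.
  apply: filterS (h 1 ltr01) => t /andP[h0 h1].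
  by rewrite fin_numE; apply/andP; split;
    [apply: contraTneq h0 => ->|apply: contraTneq h1 => ->].
apply/cvgrPdist_lt => e he.
have he2 : 0 < e / 2 by rewrite divr_gt0.
apply: filterS (h _ he2) => t /andP[h0 h1].
have ft : f t \is a fin_num.
  by rewrite fin_numE; apply/andP; split;
    [apply: contraTneq h0 => ->|apply: contraTneq h1 => ->].
move: h0 h1; rewrite -(fineK ft) !lee_fin /= sub0r normrN => h0 h1.
rewrite ger0_norm //; apply: le_lt_trans h1 _.
by rewrite ltr_pdivrMr // ltr_pMr // ltr1n.
Qed.

Lemma near_punct (R : realType) (X : Type) (d : X -> X -> R) (u : X -> R)
  (a e : R) :
  0 < e -> 0 < a < 1 -> ~ P0 d u a ->
  exists2 d0 : R, 0 < d0 & forall b, `|a - b| < d0 -> b != a ->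
    (hausdorff d (acut d u b) (acut d u a) < e%:E)%E.
Proof.
move=> he ha hP.
rewrite /P0 /= in hP.
have hf := contrapT (fun hn => hP (conj ha hn)).
have := cvg_to0 hf he.
rewrite near_withinE => hN.
have /nbhs_ballP [d0 d0p hb] := hN ltac:(typeclasses eauto).
exists d0 => // b hab hne; apply: hb => //.
Qed.

Lemma acut_pos (R : realType) (X : Type) (d : X -> X -> R) (v : X -> R) (b : R) x :
  0 < b -> acut d v b x = (b <= v x).
Proof. by move=> b0; rewrite /acut; case: ifPn => //; rewrite b0. Qed.

Theorem theorem4p5 (R : realType) (X : Type) (d : X -> X -> R)
  (u : X -> R) (us : nat -> X -> R) :
  is_metric d ->
  F_USC d u ->
  (forall n, F_USC d (us n)) ->
  ((fun n => H_end d (us n) u) @ \oo --> 0%E) ->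
  forall a : R, 0 < a < 1 -> ~ P0 d u a ->
    (fun n => hausdorff d (acut d (us n) a) (acut d u a)) @ \oo --> 0%E.
Proof.
move=> [d0p [_ [dsym dtri]]] [ur hcut] _ hH a ha hP.
have /andP[a0 a1] := ha.
apply: cvg_from0 => e he.
have he2 : 0 < e / 2 by rewrite divr_gt0.
have [r0 r0p hr] := near_punct he2 ha hP.
pose del := Num.min (r0 / 2) (Num.min (a / 2) ((1 - a) / 2)).
have delp : 0 < del.
  by rewrite /del !lt_min !divr_gt0 // subr_gt0.
have del1 : del <= r0 / 2 by rewrite /del ge_min lexx.
have del2 : del <= a / 2 by rewrite /del !ge_min lexx orbT.
have del3 : del <= (1 - a) / 2 by rewrite /del !ge_min lexx !orbT.
pose eta := Num.min del (e / 2).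
have etap : 0 < eta by rewrite /eta lt_min delp he2.
have eta1 : eta <= del by rewrite /eta ge_min lexx.
have eta2 : eta <= e / 2 by rewrite /eta ge_min lexx orbT.
apply: filterS (cvg_to0 hH etap) => n /haus_lt [h1 h2].
apply: haus_le => //.
- have := hcut a; rewrite (ltW a0) (ltW a1) => /(_ isT) [ne _]; exact: ne.
- move=> x; rewrite acut_pos // => hx.
  have hx' : endo (us n) (x, a) by split => //=; rewrite (ltW a0) (ltW a1).
  have [[y t] [/= /andP[t0 t1] ty] hd] := h1 (x, a) hx'.
  rewrite /dbar /= in hd.
  have dxy : d x y < eta.
    by apply: le_lt_trans hd; rewrite lerDl normr_ge0.
  have hat : `|a - t| < eta.
    by apply: le_lt_trans hd; rewrite lerDr d0p.
  move: hat; rewrite ltr_norml => /andP[hat1 hat2].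
  case: (leP a t) => [at_|ta].
    exists y; first by rewrite acut_pos // (le_trans at_ ty).
    lra.
  have tpos : 0 < t by lra.
  have [hA _] := haus_lt (hr t ltac:(rewrite ltr_norml; apply/andP; split; lra)
                                  ltac:(rewrite lt_eqF //)).
  have [z hz dyz] := hA y ltac:(by rewrite acut_pos).
  exists z => //.
  have := dtri x y z; lra.
- move=> z; rewrite acut_pos // => hz.
  have bpos : 0 < a + del by lra.
  have [_ hB] := haus_lt (hr (a + del) ltac:(rewrite ltr_norml; apply/andP; split; lra)
                                  ltac:(rewrite gt_eqF //; lra)).
  have [y' hy' dyz] := hB z ltac:(by rewrite acut_pos).
  rewrite acut_pos // in hy'.
  have hy'' : endo u (y', a + del) by split => //=; apply/andP; split; lra.
  have [[x t] [/= /andP[t0 t1] tx] hd] := h2 _ hy''.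
  rewrite /dbar /= in hd.
  have dxy : d x y' < eta.
    by apply: le_lt_trans hd; rewrite lerDl normr_ge0.
  have hat : `|t - (a + del)| < eta.
    by apply: le_lt_trans hd; rewrite lerDr d0p.
  move: hat; rewrite ltr_norml => /andP[hat1 hat2].
  exists x; first by rewrite acut_pos //; lra.
  have := dtri x y' z; lra.
Qed.
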